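(* Let $\mathcal{JS}=(\mathcal F,\mathcal F_d,R,\mathcal B)$ be a justification system with complementary frame and consistent branch evaluation $\mathcal B$. Then for every $x\in\mathcal F_d$ and every interpretation $\mathcal I$, $$S_t(x,\mathcal I)\le_t\ \sim S_t(\sim x,\mathcal I)\qquad\text{and}\qquad S_g(x,\mathcal I)\le_t\ \sim S_g(\sim x,\mathcal I).$$
   Context: Let $\mathcal F$ be a set (fact space) containing $\mathcal L=\{\mathbf t,\mathbf f,\mathbf u\}$ with an involution $\sim$ satisfying $\sim\mathbf t=\mathbf f$, $\sim\mathbf u=\mathbf u$, $\sim x\ne x$ for $x\ne\mathbf u$; $\sim A=\{\sim a:a\in A\}$. Truth order $\mathbf f<_t\mathbf u<_t\mathbf t$; $\bigwedge,\bigvee$ are glb/lub in $(\mathcal L,\le_t)$ ($\bigvee\emptyset=\mathbf f$). A justification frame is $\mathcal{JF}=(\mathcal F,\mathcal F_d,R)$ with $\mathcal F_d\subseteq\mathcal F$, $\sim\mathcal F_d=\mathcal F_d$, $\mathcal F_d\cap\mathcal L=\emptyset$, $R\subseteq\mathcal F_d\times2^{\mathcal F}$ a set of rules $x\gets A$ with nonempty bodies, every $x\in\mathcal F_d$ heading a rule; $\mathcal F_o=\mathcal F\setminus\mathcal F_d$. A selection function for $x\in\mathcal F_d$ assigns to each body $A$ of a rule $x\gets A$ an element $s(A)\in A$; $R^*$ is the set of rules $\sim x\gets\sim\mathrm{Im}(s)$ ($x\in\mathcal F_d$, $s$ a selection function for $x$, $\mathrm{Im}(s)$ its image); the frame is complementary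 if $R^*=R$. A justification is a directed graph $(N,E)$ with labelling $\ell:N\to\mathcal F$ such that each internal node $n$ (node with an outgoing edge) has $\ell(n)\in\mathcal F_d$ and $\ell(n)\gets\{\ell(m):(n,m)\in E\}\in R$; graph-like if $\ell$ injective; tree-like if the underlying undirected graph is acyclic; locally complete if no leaf is labelled by a defined fact. A $\mathcal{JF}$-branch is an infinite sequence of defined facts or a finite sequence $x_0\to\cdots\to x_k$ ($k\ge1$) with $x_0,\dots,x_{k-1}\in\mathcal F_d$, $x_k\in\mathcal F_o$; $\sim b$ applies $\sim$ elementwise. $B_J(n)$ is the set of label sequences of maximal paths of $J$ starting at node $n$. A branch evaluation $\mathcal B$ maps $\mathcal{JF}$-branches to elements of $\mathcal F$; consistent if $\mathcal B(\sim b)=\sim\mathcal B(b)$. An interpretation is $\mathcal I:\mathcal F\to\mathcal L$ with $\mathcal I(\sim x)=\sim\mathcal I(x)$, $\mathcal I(l)=l$ on $\mathcal L$. $\mathrm{val}(J,n,\mathcal I)=\bigwedge_{b\in B_J(n)}\mathcal I(\mathcal B(b))$. For $y\in\mathcal F_d$, $S_g(y,\mathcal I)$ is the $\bigvee$ of $\mathrm{val}(J,n,\mathcal I)$ over all locally complete graph-like justifications $J$ and nodes $n$ with $\ell(n)=y$; $S_t(y,\mathcal I)$ is the same with tree-like justifications. *)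

(* Defs.v *)
From Stdlib Require Import List Arith ClassicalEpsilon.
Import ListNotations.

Inductive L3 : Type := Lt | Lf | Lu.

Definition negL (v : L3) : L3 :=
  match v with Lt => Lf | Lf => Lt | Lu => Lu end.

Definition rankL (v : L3) : nat := match v with Lf => 0 | Lu => 1 | Lt => 2 end.
Definition leL (a b : L3) : Prop := rankL a <= rankL b.

Definition decP (P : Prop) : bool :=
  if excluded_middle_informative P then true else false.

Definition supL (P : L3 -> Prop) : L3 :=
  if decP (P Lt) then Lt else if decP (P Lu) then Lu else Lf.
Definition infL (P : L3 -> Prop) : L3 :=
  if decP (P Lf) then Lf else if decP (P Lu) then Lu else Lt.

Record FactSpace := {
  fct :> Type;
  fneg : fct -> fct;
  fl : L3 -> fct;
  fl_inj : forall a b, fl a = fl b -> a = b;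
  fneg_invol : forall x, fneg (fneg x) = x;
  fneg_t : fneg (fl Lt) = fl Lf;
  fneg_u : fneg (fl Lu) = fl Lu;
  fneg_irr : forall x, x <> fl Lu -> fneg x <> x
}.

(* A justification frame (F, F_d, R); bodies are subsets of F (predicates). *)
Record JFrame (FS : FactSpace) := {
  Fd : FS -> Prop;
  R : FS -> (FS -> Prop) -> Prop;        (* R x A  <->  (x <- A) is a rule *)
  Fd_neg : forall x, Fd (fneg FS x) <-> Fd x;
  Fd_L : forall l, ~ Fd (fl FS l);
  R_head : forall x A, R x A -> Fd x;
  R_body_nonempty : forall x A, R x A -> exists a, A a;
  R_total : forall x, Fd x -> exists A, R x A
}.
Arguments Fd {FS}.
Arguments R {FS}.

(* R^* : rules  ~y <- ~Im(s)  for y defined and s a selection function for y *)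
Definition Rstar {FS : FactSpace} (JF : JFrame FS) (x : FS) (A : FS -> Prop) : Prop :=
  exists y, Fd JF y /\ x = fneg FS y /\
    exists s : (FS -> Prop) -> FS,
      (forall B, R JF y B -> B (s B)) /\
      A = (fun z => exists B, R JF y B /\ z = fneg FS (s B)).

Definition complementary {FS : FactSpace} (JF : JFrame FS) : Prop :=
  forall x A, R JF x A <-> Rstar JF x A.

Inductive branch (X : Type) : Type :=
  | BInf : (nat -> X) -> branch X
  | BFin : list X -> branch X.
Arguments BInf {X}.
Arguments BFin {X}.

Definition bneg {FS : FactSpace} (b : branch FS) : branch FS :=
  match b with
  | BInf s => BInf (fun i => fneg FS (s i))
  | BFin l => BFin (map (fneg FS) l)
  end.

Definition is_branch {FS : FactSpace} (JF : JFrame FS) (b : branch FS) : Prop :=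
  match b with
  | BInf s => forall i, Fd JF (s i)
  | BFin l => exists l' xk, l = l' ++ [xk] /\ l' <> [] /\
                Forall (Fd JF) l' /\ ~ Fd JF xk
  end.

(* a branch evaluation is any map B : branches -> F; consistency: *)
Definition consistent {FS : FactSpace} (JF : JFrame FS) (B : branch FS -> FS) : Prop :=
  forall b, is_branch JF b -> B (bneg b) = fneg FS (B b).

Definition interpretation {FS : FactSpace} (I : FS -> L3) : Prop :=
  (forall x, I (fneg FS x) = negL (I x)) /\ (forall l, I (fl FS l) = l).

Record justification {FS : FactSpace} (JF : JFrame FS) := {
  jN : Type;
  jE : jN -> jN -> Prop;
  jl : jN -> FS;
  j_rule : forall n, (exists m, jE n m) ->
     Fd JF (jl n) /\ R JF (jl n) (fun z => exists m, jE n m /\ jl m = z)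
}.
Arguments jN {FS JF}.
Arguments jE {FS JF}.
Arguments jl {FS JF}.

Fixpoint chain {N : Type} (E : N -> N -> Prop) (n : N) (ps : list N) : Prop :=
  match ps with
  | [] => True
  | m :: ps' => E n m /\ chain E m ps'
  end.

Definition graph_like {FS} {JF : JFrame FS} (J : justification JF) : Prop :=
  forall n m, jl J n = jl J m -> n = m.

(* underlying undirected (multi)graph is acyclic: no loops, no pair of
   opposite arcs (a 2-cycle), and no cycle through >= 3 distinct nodes *)
Definition tree_like {FS} {JF : JFrame FS} (J : justification JF) : Prop :=
  let adj := fun a b => jE J a b \/ jE J b a in
  (forall n, ~ jE J n n) /\
  (forall n m, ~ (jE J n m /\ jE J m n)) /\
  (forall n0 rest, 2 <= length rest -> NoDup (n0 :: rest) ->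
     ~ (chain adj n0 rest /\ adj (last rest n0) n0)).

Definition locally_complete {FS} {JF : JFrame FS} (J : justification JF) : Prop :=
  forall n, ~ (exists m, jE J n m) -> ~ Fd JF (jl J n).

(* b \in B_J(n): label sequence of a maximal path starting at n *)
Definition in_BJ {FS} {JF : JFrame FS} (J : justification JF) (n : jN J)
  (b : branch FS) : Prop :=
  match b with
  | BInf s => exists p : nat -> jN J, p 0 = n /\
                (forall i, jE J (p i) (p (S i))) /\ (forall i, s i = jl J (p i))
  | BFin l => exists ps : list (jN J), chain (jE J) n ps /\
                ~ (exists m, jE J (last ps n) m) /\ l = map (jl J) (n :: ps)
  end.

Definition val {FS} {JF : JFrame FS} (B : branch FS -> FS)
  (J : justification JF) (n : jN J) (I : FS -> L3) : L3 :=
  infL (fun v => exists b, in_BJ J n b /\ I (B b) = v).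

Definition S_g {FS} (JF : JFrame FS) (B : branch FS -> FS) (y : FS) (I : FS -> L3) : L3 :=
  supL (fun v => exists (J : justification JF) (n : jN J),
          locally_complete J /\ graph_like J /\ jl J n = y /\ val B J n I = v).

Definition S_t {FS} (JF : JFrame FS) (B : branch FS -> FS) (y : FS) (I : FS -> L3) : L3 :=
  supL (fun v => exists (J : justification JF) (n : jN J),
          locally_complete J /\ tree_like J /\ jl J n = y /\ val B J n I = v).

(* Main.v *)
Require Import Defs.
From Stdlib Require Import List Arith Lia Classical ClassicalEpsilon.
Import ListNotations.

Section S.
Context {FS : FactSpace} (JF : JFrame FS) (Hcompl : complementary JF).

Lemma fneg_inj (a b : FS) : fneg FS a = fneg FS b -> a = b.
Proof. intro H. rewrite <- (fneg_invol FS a), <- (fneg_invol FS b), H. reflexivity. Qed.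

Lemma has_edge (J : justification JF) n : locally_complete J -> Fd JF (jl J n) -> exists m, jE J n m.
Proof. intros Hl Hd. apply NNPP. intro H. exact (Hl n H Hd). Qed.

Lemma step (J1 J2 : justification JF) a b :
  locally_complete J1 -> locally_complete J2 ->
  Fd JF (jl J1 a) -> jl J2 b = fneg FS (jl J1 a) ->
  exists a' b', jE J1 a a' /\ jE J2 b b' /\ jl J2 b' = fneg FS (jl J1 a').
Proof.
  intros L1 L2 Ha Hb.
  assert (Hb' : Fd JF (jl J2 b)) by (rewrite Hb; apply Fd_neg; exact Ha).
  destruct (j_rule _ J1 a (has_edge J1 a L1 Ha)) as [_ R1].
  destruct (j_rule _ J2 b (has_edge J2 b L2 Hb')) as [_ R2].
  apply Hcompl in R2. destruct R2 as [y [Hy [Hxy [s [Hs HA]]]]].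
  rewrite Hb in Hxy. apply fneg_inj in Hxy. subst y.
  destruct (Hs _ R1) as [m1 [E1 Lm1]].
  assert (Hin : exists m, jE J2 b m /\ jl J2 m = fneg FS (s (fun z => exists m, jE J1 a m /\ jl J1 m = z))).
  { assert (HH := f_equal (fun P : FS -> Prop => P (fneg FS (s (fun z => exists m, jE J1 a m /\ jl J1 m = z)))) HA).
    simpl in HH. rewrite HH. eexists; split; [exact R1|reflexivity]. }
  destruct Hin as [m2 [E2 Lm2]].
  exists m1, m2. repeat split; auto. rewrite Lm2, Lm1. reflexivity.
Qed.

Lemma last_cons_d {N} (x d : N) l : last (x :: l) d = last l x.
Proof. revert x; induction l; intros; [reflexivity|]. simpl. destruct l; [reflexivity|]. apply IHl. Qed.

Lemma chain_seq {N} (E : N -> N -> Prop) (f : nat -> N) k : forall a,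
  (forall j, a <= j < a + k -> E (f j) (f (S j))) ->
  chain E (f a) (map f (List.seq (S a) k)).
Proof.
  induction k; intros a H; simpl; auto.
  split. apply H; lia. apply IHk. intros; apply H; lia.
Qed.

Lemma last_seq {N} (f : nat -> N) k : forall a,
  last (map f (List.seq (S a) k)) (f a) = f (a + k).
Proof.
  induction k; intros a. simpl. f_equal; lia.
  change (last (f (S a) :: map f (List.seq (S (S a)) k)) (f a) = f (a + S k)).
  rewrite last_cons_d, IHk. f_equal; lia.
Qed.

Lemma least_not (P : nat -> Prop) n : ~ P n -> exists k, ~ P k /\ forall j, j < k -> P j.
Proof.
  induction n as [n IH] using lt_wf_ind. intro Hn.
  destruct (classic (forall j, j < n -> P j)) as [H|H].
  - exists n; auto.
  - apply not_all_ex_not in H. destruct H as [j Hj].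
    apply imply_to_and in Hj. destruct Hj. apply (IH j); auto.
Qed.

Lemma pair_branch (J1 J2 : justification JF) n1 n2 :
  locally_complete J1 -> locally_complete J2 ->
  Fd JF (jl J1 n1) -> jl J2 n2 = fneg FS (jl J1 n1) ->
  exists b, is_branch JF b /\ in_BJ J1 n1 b /\ in_BJ J2 n2 (bneg b).
Proof.
  intros L1 L2 Hd Hg.
  set (good := fun p : jN J1 * jN J2 => jl J2 (snd p) = fneg FS (jl J1 (fst p))).
  assert (Hf : exists f : jN J1 * jN J2 -> jN J1 * jN J2, forall p, good p ->
     good (f p) /\ (Fd JF (jl J1 (fst p)) -> jE J1 (fst p) (fst (f p)) /\ jE J2 (snd p) (snd (f p)))).
  { exists (fun p => match excluded_middle_informative (good p /\ Fd JF (jl J1 (fst p))) with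
       | left h => let (a', h') := constructive_indefinite_description _
                    (step J1 J2 (fst p) (snd p) L1 L2 (proj2 h) (proj1 h)) in
                   let (b', _) := constructive_indefinite_description _ h' in (a', b')
       | right _ => p end).
    intros p Hp. destruct (excluded_middle_informative _) as [h|h].
    - destruct (constructive_indefinite_description _ _) as [a' h'].
      destruct (constructive_indefinite_description _ _) as [b' [e1 [e2 e3]]].
      split; [exact e3|auto].
    - split; [exact Hp|]. intro Hd'. exfalso; auto. }
  destruct Hf as [f Hf].
  set (sq := fun i => Nat.iter i f (n1, n2)).
  assert (G : forall i, good (sq i)).
  { induction i. exact Hg. simpl. apply Hf; exact IHi. }
  assert (Ed : forall i, Fd JF (jl J1 (fst (sq i))) ->
     jE J1 (fst (sq i)) (fst (sq (S i))) /\ jE J2 (snd (sq i)) (snd (sq (S i)))).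
  { intros i H. apply (proj2 (Hf _ (G i)) H). }
  destruct (classic (forall i, Fd JF (jl J1 (fst (sq i))))) as [Hall|Hnot].
  - exists (BInf (fun i => jl J1 (fst (sq i)))). simpl. split; [exact Hall|split].
    + exists (fun i => fst (sq i)). split; [reflexivity|split; [intro i; apply Ed, Hall|reflexivity]].
    + exists (fun i => snd (sq i)). split; [reflexivity|split; [intro i; apply Ed, Hall|]].
      intro i. symmetry. apply G.
  - apply not_all_ex_not in Hnot. destruct Hnot as [n0 Hn0].
    destruct (least_not (fun i => Fd JF (jl J1 (fst (sq i)))) n0 Hn0) as [k [Hk Hlt]].
    assert (k0 : k <> 0). { intro; subst k. apply Hk. exact Hd. }
    exists (BFin (map (fun i => jl J1 (fst (sq i))) (List.seq 0 (S k)))).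
    split; [|split].
    + unfold is_branch. exists (map (fun i => jl J1 (fst (sq i))) (List.seq 0 k)), (jl J1 (fst (sq k))).
      split. rewrite seq_S, map_app. reflexivity.
      split. destruct k; [lia|discriminate].
      split; [|exact Hk].
      apply Forall_forall. intros x Hx. apply in_map_iff in Hx.
      destruct Hx as [j [<- Hj]]. apply in_seq in Hj. apply Hlt; lia.
    + simpl. exists (map (fun i => fst (sq i)) (List.seq 1 k)). split; [|split].
      * apply (chain_seq (jE J1) (fun i => fst (sq i)) k 0).
        intros j Hj. apply Ed, Hlt; lia.
      * replace (last _ n1) with (fst (sq k)) by (symmetry; exact (last_seq (fun i => fst (sq i)) k 0)).
        intros [m Hm]. apply Hk. exact (proj1 (j_rule _ J1 _ (ex_intro _ m Hm))).
      * simpl. rewrite map_map. reflexivity.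
    + simpl. exists (map (fun i => snd (sq i)) (List.seq 1 k)). split; [|split].
      * apply (chain_seq (jE J2) (fun i => snd (sq i)) k 0).
        intros j Hj. apply Ed, Hlt; lia.
      * replace (last _ n2) with (snd (sq k)) by (symmetry; exact (last_seq (fun i => snd (sq i)) k 0)).
        intros [m Hm]. apply Hk.
        destruct (j_rule _ J2 _ (ex_intro _ m Hm)) as [Hq _].
        pose proof (G k) as Gk. unfold good in Gk. rewrite Gk in Hq.
        exact (proj1 (Fd_neg _ JF _) Hq).
      * simpl. rewrite !map_map. f_equal. exact (eq_sym Hg).
        apply map_ext. intro i. symmetry. apply G.
Qed.
End S.

Lemma infL_le (P : L3 -> Prop) v : P v -> leL (infL P) v.
Proof.
  intro H. unfold infL, leL, decP.
  destruct (excluded_middle_informative (P Lf)); simpl; [lia|].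
  destruct (excluded_middle_informative (P Lu)); simpl.
  - destruct v; simpl; try lia. contradiction.
  - destruct v; simpl; try lia; contradiction.
Qed.

Lemma supL_cases (P : L3 -> Prop) : supL P = Lf \/ P (supL P).
Proof.
  unfold supL, decP.
  destruct (excluded_middle_informative (P Lt)); auto.
  destruct (excluded_middle_informative (P Lu)); auto.
Qed.

Lemma rank_neg v : rankL (negL v) = 2 - rankL v.
Proof. destruct v; reflexivity. Qed.

Theorem mainTheorem11 (FS : FactSpace) (JF : JFrame FS) (B : branch FS -> FS)
  (Hcompl : complementary JF) (Hcons : consistent JF B) :
  forall (x : FS) (I : FS -> L3), Fd JF x -> interpretation I ->
    leL (S_t JF B x I) (negL (S_t JF B (fneg FS x) I)) /\
    leL (S_g JF B x I) (negL (S_g JF B (fneg FS x) I)).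
Proof.
  intros x I Hx [HI _].
  assert (key : forall (J1 J2 : justification JF) n1 n2,
     locally_complete J1 -> locally_complete J2 -> jl J1 n1 = x -> jl J2 n2 = fneg FS x ->
     rankL (val B J1 n1 I) + rankL (val B J2 n2 I) <= 2).
  { intros J1 J2 n1 n2 L1 L2 E1 E2. subst x.
    destruct (pair_branch JF Hcompl J1 J2 n1 n2 L1 L2 Hx E2) as [b [Hb [B1 B2]]].
    assert (V1 : leL (val B J1 n1 I) (I (B b))) by (apply infL_le; eauto).
    assert (V2 : leL (val B J2 n2 I) (I (B (bneg b)))) by (apply infL_le; eauto).
    rewrite (Hcons b Hb), HI in V2. unfold leL in *. rewrite rank_neg in V2.
    destruct (I (B b)); simpl in *; lia. }
  split; unfold leL; rewrite rank_neg.
  - unfold S_t.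
    destruct (supL_cases (fun v => exists (J : justification JF) (n : jN J),
          locally_complete J /\ tree_like J /\ jl J n = x /\ val B J n I = v)) as [H1|H1];
    [rewrite H1; simpl; lia|].
    destruct (supL_cases (fun v => exists (J : justification JF) (n : jN J),
          locally_complete J /\ tree_like J /\ jl J n = fneg FS x /\ val B J n I = v)) as [H2|H2].
    + rewrite H2. simpl. destruct (supL _); simpl; lia.
    + destruct H1 as [J1 [n1 [a1 [_ [c1 <-]]]]]. destruct H2 as [J2 [n2 [a2 [_ [c2 d2]]]]].
      rewrite <- d2. pose proof (key J1 J2 n1 n2 a1 a2 c1 c2). lia.
  - unfold S_g.
    destruct (supL_cases (fun v => exists (J : justification JF) (n : jN J),
          locally_complete J /\ graph_like J /\ jl J n = x /\ val B J n I = v)) as [H1|H1];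
    [rewrite H1; simpl; lia|].
    destruct (supL_cases (fun v => exists (J : justification JF) (n : jN J),
          locally_complete J /\ graph_like J /\ jl J n = fneg FS x /\ val B J n I = v)) as [H2|H2].
    + rewrite H2. simpl. destruct (supL _); simpl; lia.
    + destruct H1 as [J1 [n1 [a1 [_ [c1 <-]]]]]. destruct H2 as [J2 [n2 [a2 [_ [c2 d2]]]]].
      rewrite <- d2. pose proof (key J1 J2 n1 n2 a1 a2 c1 c2). lia.
Qed.
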